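(* Let $(M,\widetilde B)$ be a strict root of unity quantum seed with respect to a skew-symmetric integer matrix $\Lambda\in M_N(\mathbb Z)$, and let $k\in\mathrm{ex}$ and $s\in\{+,-\}$. Then $\mu_k(M,\widetilde B)$ is also a strict root of unity quantum seed, with respect to the skew-symmetric integer matrix $\Lambda'=E_s^\top\Lambda E_s$.
   Context: Let $\ell$ be a positive integer, $\mathbb Z_\ell=\mathbb Z/\ell\mathbb Z$, $\varepsilon^{1/2}\in\mathbb C$ a primitive $\ell$-th root of unity, $\mathcal A^{1/2}_\varepsilon=\mathbb Z[\varepsilon^{1/2}]$, $\varepsilon^{a/2}=(\varepsilon^{1/2})^a$ for $a\in\mathbb Z_\ell$; $\overline C$ is the reduction mod $\ell$ of an integer matrix $C$; $e_1,\dots,e_N$ is the standard basis of $\mathbb Z^N$. For a skew-symmetric bilinear form $\Lambda:\mathbb Z^N\times\mathbb Z^N\to\mathbb Z_\ell$ with matrix $(\lambda_{ij})$, $\mathcal T_\varepsilon(\Lambda)$ is the $\mathcal A^{1/2}_\varepsilon$-algebra with basis $\{X^f\}_{f\in\mathbb Z^N}$ and $X^fX^g=\varepsilon^{\Lambda(f,g)/2}X^{f+g}$. A root of unity toric frame of a division algebra $\mathcal F$ over $\mathbb Q(\varepsilon^{1/2})$ is a map $M:\mathbb Z^N\to\mathcal F$ such that for some (unique) skew-symmetric $\Lambda=:\Lambda_M$ there is an injective $\mathcal A^{1/2}_\varepsilon$-algebra map $\phi:\mathcal T_\varepsilon(\Lambda)\to\mathcal F$, $\phi(X^f)=M(f)$,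 with $\mathcal F$ the skew field of fractions of its image. Fix $\mathrm{ex}\subseteq[1,N]$. An exchange matrix $\widetilde B=(b_{ij})$ is an integer matrix with rows indexed by $[1,N]$, columns by $\mathrm{ex}$, principal part $B$, $k$-th column $b^k$. $(\Lambda,\widetilde B)$ (with $\Lambda$ over $\mathbb Z_\ell$) is $\ell$-compatible with respect to $D=\mathrm{diag}(d_j)_{j\in\mathrm{ex}}$, $d_j\in\mathbb Z_{>0}$, if $DB$ is skew-symmetric and $\sum_k\overline b_{kj}\lambda_{ki}=\delta_{ij}\overline d_j$ in $\mathbb Z_\ell$ for all $i\in[1,N]$, $j\in\mathrm{ex}$; a root of unity quantum seed is $(M,\widetilde B)$ with $(\Lambda_M,\widetilde B)$ $\ell$-compatible. A pair $(\Lambda,\widetilde B)$ with $\Lambda=(\lambda_{ij})\in M_N(\mathbb Z)$ skew-symmetric is compatible with respect to $D$ if $\sum_k b_{kj}\lambda_{ki}=\delta_{ij}d_j$ for all $i\in[1,N]$, $j\in\mathrm{ex}$. A root of unity quantum seed $(M,\widetilde B)$, $\ell$-compatible w.r.t. $D$, is strict with respect to a skew-symmetric $\Lambda\in M_N(\mathbb Z)$ if $\overline\Lambda=\Lambda_M$ and $(\Lambda,\widetilde B)$ is compatible with respect to the same $D$. For a sign $s$, $E_s=(e_{ij})\in M_N(\mathbb Z)$ has $e_{ij}=\delta_{ij}$ for $j\ne k$, $e_{kk}=-1$, $e_{ik}=\max(0,-sb_{ik})$ for $i\ne k$. For $b\in\mathbb Z^N$, $[b]_\pm$ keeps the entries $b_i$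 with $\pm b_i\ge0$ and sets the others to $0$. Mutation: $\mu_k(\widetilde B)=(b'_{ij})$, $b'_{ij}=-b_{ij}$ if $i=k$ or $j=k$, otherwise $b'_{ij}=b_{ij}+(|b_{ik}|b_{kj}+b_{ik}|b_{kj}|)/2$; $\mu_k(M)$ is the root of unity toric frame with matrix $\overline E_s^\top\Lambda_M\overline E_s$ (independent of $s$) and $\mu_k(M)(e_j)=M(e_j)$ ($j\ne k$), $\mu_k(M)(e_k)=M(-e_k+[b^k]_+)+M(-e_k-[b^k]_-)$. *)

(* Defs.v *)
From mathcomp Require Import all_boot all_order all_algebra.
Set Implicit Arguments. Unset Strict Implicit. Unset Printing Implicit Defensive.
Import Order.TTheory GRing.Theory Num.Theory.
Local Open Scope ring_scope.

(* Indices [1,N] are modelled by 'I_N; ex : {set 'I_N}.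
   Exchange matrices are stored as N x N integer matrices, of which only the
   columns indexed by ex are meaningful (other columns are ignored by every
   definition below that matters).  D = diag(d_j)_{j in ex} is a function
   'I_N -> int whose values outside ex are irrelevant.
   Elements of Z_l are represented by integers, compared modulo l. *)

Definition congl (l : nat) (a b : int) : Prop := (a == b %[mod l%:Z])%Z.

Definition skewZ (N : nat) (L : 'M[int]_N) : Prop :=
  forall i j, L i j = - L j i.

Definition skew_mod (l N : nat) (L : 'M[int]_N) : Prop :=
  forall i j, congl l (L i j) (- L j i).

Definition DB_skew (N : nat) (ex : {set 'I_N}) (Bt : 'M[int]_N) (D : 'I_N -> int) : Prop :=
  (forall j, j \in ex -> 0 < D j) /\
  (forall i j, i \in ex -> j \in ex -> D i * Bt i j = - (D j * Bt j i)).

Definition compatible (N : nat) (ex : {set 'I_N}) (L Bt : 'M[int]_N) (D : 'I_N -> int) : Prop :=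
  DB_skew ex Bt D /\
  forall i j, j \in ex -> \sum_(k < N) Bt k j * L k i = (i == j)%:R * D j.

Definition l_compatible (l N : nat) (ex : {set 'I_N}) (L Bt : 'M[int]_N) (D : 'I_N -> int) : Prop :=
  DB_skew ex Bt D /\
  forall i j, j \in ex -> congl l (\sum_(k < N) Bt k j * L k i) ((i == j)%:R * D j).

(* A root of unity quantum seed (M, Bt), recorded through the matrix LM of
   Lambda_M (over Z_l, integer representatives) and Bt. *)
Definition rou_seed (l N : nat) (ex : {set 'I_N}) (LM Bt : 'M[int]_N) (D : 'I_N -> int) : Prop :=
  skew_mod l LM /\ l_compatible l ex LM Bt D.

Definition strict_seed (l N : nat) (ex : {set 'I_N}) (LM Bt : 'M[int]_N) (D : 'I_N -> int)
    (L : 'M[int]_N) : Prop :=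
  rou_seed l ex LM Bt D /\ skewZ L /\ (forall i j, congl l (L i j) (LM i j)) /\
  compatible ex L Bt D.

Definition Emat (N : nat) (Bt : 'M[int]_N) (k : 'I_N) (s : bool) : 'M[int]_N :=
  \matrix_(i, j)
    if j != k then (i == j)%:R
    else if i == k then -1
    else Num.max 0 (- ((if s then 1 else -1) * Bt i k)).

Definition mutB (N : nat) (k : 'I_N) (Bt : 'M[int]_N) : 'M[int]_N :=
  \matrix_(i, j)
    if (i == k) || (j == k) then - Bt i j
    else Bt i j + ((`|Bt i k| * Bt k j + Bt i k * `|Bt k j|) %/ 2)%Z.

Definition mutLM (N : nat) (Bt : 'M[int]_N) (k : 'I_N) (s : bool) (LM : 'M[int]_N) : 'M[int]_N :=
  (Emat Bt k s)^T *m LM *m Emat Bt k s.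

(* Main.v *)
Require Import Defs.
From mathcomp Require Import all_boot all_order all_algebra.
From mathcomp Require Import zify ring.
Set Implicit Arguments. Unset Strict Implicit. Unset Printing Implicit Defensive.
Import Order.TTheory GRing.Theory Num.Theory.
Local Open Scope ring_scope.

Lemma sum1 (N : nat) (f : 'I_N -> int) x :
  (forall a, a != x -> f a = 0) -> \sum_a f a = f x.
Proof.
move=> H; rewrite (bigD1 x) //= big1 ?addr0 // => a /H.
Qed.

Lemma sum2 (N : nat) (f : 'I_N -> int) x y : x != y ->
  (forall a, a != x -> a != y -> f a = 0) -> \sum_a f a = f x + f y.
Proof.
move=> xy H; rewrite (bigD1 x) //= (bigD1 y) 1?eq_sym //= big1 ?addr0 ?addrA //.
by move=> a /andP[ay ax]; apply: H.
Qed.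

Lemma halfW (a b : int) :
  ((`|a| * b + a * `|b|) %/ 2)%Z = a * Num.max 0 b + Num.max 0 (-a) * b.
Proof.
have -> : `|a| * b + a * `|b| = (a * Num.max 0 b + Num.max 0 (-a) * b) * 2 by nia.
by rewrite mulzK.
Qed.

Lemma Wsg (sg a b : int) : (sg = 1 \/ sg = -1) ->
  a * Num.max 0 (sg * b) + Num.max 0 (-(sg * a)) * b =
  a * Num.max 0 b + Num.max 0 (-a) * b.
Proof. by case=> ->; rewrite ?mul1r ?mulN1r ?opprK; lia. Qed.

Lemma maxM (d x : int) : 0 < d -> d * Num.max 0 x = Num.max 0 (d * x).
Proof. by move=> d0; rewrite maxr_pMr ?mulr0 // ltW. Qed.

Definition dvdmx (l N : nat) (A : 'M[int]_N) := forall i j, (l%:Z %| A i j)%Z.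

Lemma dvdmx_mulr l N (A B : 'M[int]_N) : dvdmx l A -> dvdmx l (B *m A).
Proof.
move=> H i j; rewrite mxE; apply: rpred_sum => m _; exact: dvdz_mull.
Qed.

Lemma dvdmx_mull l N (A B : 'M[int]_N) : dvdmx l A -> dvdmx l (A *m B).
Proof.
move=> H i j; rewrite mxE; apply: rpred_sum => m _; exact: dvdz_mulr.
Qed.

Lemma dvdmx_conj l N (A E : 'M[int]_N) : dvdmx l A -> dvdmx l (E^T *m A *m E).
Proof. by move=> H; apply: dvdmx_mull; apply: dvdmx_mulr. Qed.

Lemma skew_entry N (M : 'M[int]_N) : M^T = - M -> forall i j, M i j = - M j i.
Proof.
move=> H i j; have := congr1 (fun X : 'M[int]_N => X j i) H.
by rewrite mxE [in RHS]mxE => ->; rewrite ?opprK.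
Qed.

Lemma conj_skew N (A E : 'M[int]_N) : A^T = - A ->
  (E^T *m A *m E)^T = - (E^T *m A *m E).
Proof. by move=> H; rewrite !trmx_mul trmxK H mulNmx mulmxN mulmxA. Qed.

Lemma dvdmx_sub l N (A B : 'M[int]_N) : dvdmx l (A - B) ->
  forall i j, (l%:Z %| A i j - B i j)%Z.
Proof. by move=> H i j; have := H i j; rewrite !mxE. Qed.

Lemma dvdmx_symm l N (A : 'M[int]_N) : dvdmx l (A + A^T) ->
  forall i j, (l%:Z %| A i j + A j i)%Z.
Proof. by move=> H i j; have := H i j; rewrite !mxE. Qed.

Theorem proposition5p2 (l N : nat) (ex : {set 'I_N}) (D : 'I_N -> int)
    (LM Bt L : 'M[int]_N) (k : 'I_N) (s : bool) :
  (0 < l)%N -> k \in ex ->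
  strict_seed l ex LM Bt D L ->
  strict_seed l ex (mutLM Bt k s LM) (mutB k Bt) D
    ((Emat Bt k s)^T *m L *m Emat Bt k s).
Proof.
move=> l0 kex [[skLM _] [skL [cong [[Dpos DBs] comp]]]].
set E := Emat Bt k s.
set sg : int := if s then 1 else -1.
have sgE : sg = 1 \/ sg = -1 by rewrite /sg; case: (s); [left|right].
have bkk : Bt k k = 0.
  have := DBs k k kex kex; have := Dpos k kex; nia.
have DBs' : DB_skew ex (mutB k Bt) D.
  split=> // i j iex jex; rewrite !mxE.
  case: (eqVneq i k) => [->|ik] /=.
    by rewrite orbT !mulrN DBs.
  case: (eqVneq j k) => [->|jk] /=.
    by rewrite !mulrN DBs.
  rewrite ?(negPf jk) /= !halfW.
  have h1 := DBs i k iex kex; have h2 := DBs k j kex jex.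
  have h3 := DBs i j iex jex.
  have dk := Dpos k kex; have di := Dpos i iex; have dj := Dpos j jex.
  rewrite mulrDr [in RHS]mulrDr opprD h3; congr (_ + _).
  apply: (@mulfI _ (D k)); first by rewrite gt_eqF.
  have L1 : D k * (D i * (Bt i k * Num.max 0 (Bt k j) + Num.max 0 (- Bt i k) * Bt k j))
    = (D i * Bt i k) * Num.max 0 (D k * Bt k j) + Num.max 0 (D i * - Bt i k) * (D k * Bt k j).
    by rewrite -!maxM //; ring.
  have R1 : D k * - (D j * (Bt j k * Num.max 0 (Bt k i) + Num.max 0 (- Bt j k) * Bt k i))
    = - ((D j * Bt j k) * Num.max 0 (D k * Bt k i) + Num.max 0 (D j * - Bt j k) * (D k * Bt k i)).
    by rewrite -!maxM //; ring.
  rewrite L1 R1 !mulrN h1 h2 !opprK; ring.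
have EE : E *m E = 1%:M.
  apply/matrixP => i j; rewrite !mxE.
  case: (eqVneq j k) => [->|jk].
  - case: (eqVneq i k) => [->|ik].
    + rewrite (sum1 (x := k)); first by rewrite !mxE eqxx.
      by move=> a ak; rewrite !mxE ak eqxx /= (eq_sym k a) (negPf ak) mul0r.
    + rewrite (sum2 (x := i) (y := k)) //; first by rewrite !mxE ik /= !eqxx /= (negPf ik); ring.
      by move=> a ai ak; rewrite !mxE ak /= (eq_sym i a) (negPf ai) mul0r.
  - rewrite (sum1 (x := j)); first by rewrite !mxE jk eqxx mulr1.
    by move=> a aj; rewrite [E a j]mxE jk (negPf aj) mulr0.
have EB : forall m c, (E *m Bt) m c =
    if m == k then - Bt k c else Bt m c + Num.max 0 (- (sg * Bt m k)) * Bt k c.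
  move=> m c; rewrite mxE.
  case: (eqVneq m k) => [->|mk].
  - rewrite (sum1 (x := k)); first by rewrite !mxE eqxx mulN1r.
    by move=> a ak; rewrite !mxE ak (eq_sym k a) (negPf ak) mul0r.
  - rewrite (sum2 (x := m) (y := k)) //; first by rewrite !mxE mk /= !eqxx /= (negPf mk) mul1r.
    by move=> a am ak; rewrite !mxE ak /= (eq_sym m a) (negPf am) mul0r.
pose F : 'M[int]_N := \matrix_(a, j)
  if a == k then (if j == k then -1 else Num.max 0 (sg * Bt k j)) else (a == j)%:R.
have HP : mutB k Bt = E *m Bt *m F.
  apply/matrixP => m j; rewrite [RHS]mxE.
  case: (eqVneq j k) => [->|jk].
  - rewrite (sum1 (x := k)); last first.
      by move=> a ak; rewrite !mxE (negPf ak) mulr0.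
    rewrite EB !mxE !eqxx orbT /=.
    case: (eqVneq m k) => [->|mk]; rewrite bkk; ring.
  - rewrite (sum2 (x := j) (y := k)) //; last first.
      by move=> a aj ak; rewrite !mxE (negPf ak) (negPf aj) mulr0.
    rewrite !EB !mxE !eqxx (negPf jk) /= orbF.
    case: (eqVneq m k) => [->|mk] /=; rewrite bkk; first by ring.
    rewrite halfW -(Wsg _ _ sgE); ring.
have G : forall a b, a \in ex -> (Bt^T *m L) a b = (b == a)%:R * D a.
  move=> a b aex; rewrite mxE -comp //; apply: eq_bigr => m _; by rewrite mxE.
have main : (mutB k Bt)^T *m (E^T *m L *m E) = F^T *m (Bt^T *m L) *m E.
  rewrite HP !trmx_mul !mulmxA -(mulmxA (F^T *m Bt^T) E^T E^T).
  have EET : E^T *m E^T = 1%:M by rewrite -trmx_mul EE trmx1.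
  rewrite EET mulmx1.
  by [].
have compL : forall i j, j \in ex ->
    \sum_(m < N) mutB k Bt m j * (E^T *m L *m E) m i = (i == j)%:R * D j.
  move=> i j jex.
  transitivity (((mutB k Bt)^T *m (E^T *m L *m E)) j i).
    by rewrite [RHS]mxE; apply: eq_bigr => m _; rewrite [(mutB k Bt)^T j m]mxE.
  rewrite main mxE.
  have Fz : forall a, a \notin ex -> F a j = 0.
    move=> a aex; have ak : a != k by apply: contraNneq aex => ->.
    have aj : a != j by apply: contraNneq aex => ->.
    by rewrite mxE (negPf ak) (negPf aj).
  have FG : forall b, (F^T *m (Bt^T *m L)) j b = F b j * D b.
    move=> b; rewrite mxE (sum1 (x := b)).
      rewrite mxE; case: (boolP (b \in ex)) => bex.
        by rewrite G // eqxx mul1r.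
      by rewrite Fz // !mul0r.
    move=> a ab; rewrite mxE; case: (boolP (a \in ex)) => aex.
      by rewrite G // (eq_sym b a) (negPf ab) mul0r mulr0.
    by rewrite Fz // mul0r.
  under eq_bigr do rewrite FG.
  have dk := Dpos k kex; have dj := Dpos j jex.
  case: (eqVneq j k) => [ejk|jk].
  - rewrite ejk (sum1 (x := k)); last first.
      by move=> a ak; rewrite !mxE (negPf ak) !mul0r.
    rewrite !mxE !eqxx /=.
    case: (eqVneq i k) => [eik|ik] /=; ring.
  - rewrite (sum2 (x := j) (y := k)) //; last first.
      by move=> a aj ak; rewrite !mxE (negPf ak) (negPf aj) !mul0r.
    rewrite !mxE !eqxx (negPf jk) /=.
    case: (eqVneq i k) => [->|ik].
    + rewrite /= eq_sym (negPf jk) -/sg.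
      have key : D k * Num.max 0 (sg * Bt k j) = D j * Num.max 0 (- (sg * Bt j k)).
        rewrite maxM // [RHS]maxM // mulrCA (DBs k j) //; congr (Num.max 0 _); ring.
      by rewrite mul1r mulrN1 [Num.max 0 (sg * Bt k j) * D k]mulrC key subrr mul0r.
    + rewrite /=; have [eij|nij] := eqVneq i j.
        by rewrite /= !mulr1 mul1r mulr0 addr0.
      by rewrite /= !mulr0 mul0r addr0.
have LT : L^T = - L by apply/matrixP => a b; rewrite !mxE skL.
have congL' : forall i j, (l%:Z %| (E^T *m L *m E) i j - (mutLM Bt k s LM) i j)%Z.
  apply: dvdmx_sub; rewrite /mutLM -/E -mulmxBl -mulmxBr.
  apply: dvdmx_conj => a b; rewrite !mxE -eqz_mod_dvd; exact: cong.
have symLM : forall i j, (l%:Z %| (mutLM Bt k s LM) i j + (mutLM Bt k s LM) j i)%Z.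
  apply: dvdmx_symm.
  have -> : mutLM Bt k s LM + (mutLM Bt k s LM)^T = E^T *m (LM + LM^T) *m E.
    by rewrite /mutLM -/E !trmx_mul trmxK mulmxDr mulmxDl !mulmxA.
  apply: dvdmx_conj => a b; rewrite !mxE.
  by have := skLM a b; rewrite /congl eqz_mod_dvd opprK.
split; [split; [|split] | split; [|split; [|split]]].
- by move=> i j; rewrite /congl eqz_mod_dvd opprK.
- exact: DBs'.
- move=> i j jex; rewrite /congl -compL // eqz_mod_dvd -sumrB.
  apply: rpred_sum => m _; rewrite -mulrBr; apply: dvdz_mull.
  by rewrite -opprB rpredN.
- apply: skew_entry; exact: conj_skew.
- by move=> i j; rewrite /congl eqz_mod_dvd.
- exact: DBs'.
- exact: compL.
Qed.
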